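(* Let $R$ be an abelian Rickart $*$-ring and $a,b\in R$ with $a\perp b$. Then, in the natural partial order, $a\wedge b=0$ and $a\vee b=a+b$.
   Context: A Rickart $*$-ring is a $*$-ring in which the right annihilator of every element is generated, as a right ideal, by a projection ($e=e^2=e^*$); it has unity. Abelian: all idempotents central. Natural partial order: $a\leq b$ iff there is $x\in R$ with $a=xa=xb=ax^*=bx^*$. Orthogonality: $a\perp b$ iff there is $x\in R$ with $xa=a=ax^*$ and $xb=0=bx^*$. *)

(* Defs.v *)
From mathcomp Require Import all_boot all_algebra.
Set Implicit Arguments. Unset Strict Implicit. Unset Printing Implicit Defensive.
Import GRing.Theory.
Local Open Scope ring_scope.

Definition star_ring_axioms (R : pzRingType) (s : R -> R) : Prop :=
  [/\ (forall x y : R, s (x + y) = s x + s y),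
      (forall x y : R, s (x * y) = s y * s x) &
      (forall x : R, s (s x) = x)].

Definition is_projection (R : pzRingType) (s : R -> R) (e : R) : Prop :=
  e * e = e /\ s e = e.

Definition rickart (R : pzRingType) (s : R -> R) : Prop :=
  forall x : R, exists e : R, is_projection s e /\
    (forall y : R, x * y = 0 <-> exists z : R, y = e * z).

Definition abelian_ring (R : pzRingType) : Prop :=
  forall e : R, e * e = e -> forall x : R, e * x = x * e.

Definition npo_le (R : pzRingType) (s : R -> R) (a b : R) : Prop :=
  exists x : R, [/\ x * a = a, x * b = a, a * s x = a & b * s x = a].

Definition orth (R : pzRingType) (s : R -> R) (a b : R) : Prop :=
  exists x : R, [/\ x * a = a, a * s x = a, x * b = 0 & b * s x = 0].

Definition is_meet (T : Type) (le : T -> T -> Prop) (a b m : T) : Prop :=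
  [/\ le m a, le m b & forall c, le c a -> le c b -> le c m].

Definition is_join (T : Type) (le : T -> T -> Prop) (a b j : T) : Prop :=
  [/\ le a j, le b j & forall c, le a c -> le b c -> le j c].

(* Main.v *)
Require Import Defs.
From mathcomp Require Import all_boot all_algebra.
Local Open Scope ring_scope.
Import GRing.Theory.

Theorem mainTheorem9 (R : pzRingType) (s : R -> R) :
  star_ring_axioms s -> rickart s -> abelian_ring R ->
  forall a b : R, orth s a b ->
    is_meet (npo_le s) a b 0 /\ is_join (npo_le s) a b (a + b).
Proof.
move=> [sD sM sK] rick ab a b [x [xa asx xb bsx]].
have s0 : s 0 = 0.
  by apply: (addrI (s 0)); rewrite -sD !addr0.
have sN : forall y, s (- y) = - s y.
  by move=> y; apply/eqP; rewrite -addr_eq0 -sD addNr s0.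
have sB : forall y z, s (y - z) = s y - s z by move=> y z; rewrite sD sN.
have s1 : s 1 = 1.
  by have h := sM (s 1) 1; rewrite !mulr1 !sK !mulr1 in h.
have RP : forall c, exists r, [/\ r * r = r, s r = r, forall y, r * y = y * r,
     c * r = c & forall y, c * y = 0 -> r * y = 0].
  move=> c; have [e [[ee se] he]] := rick c.
  have ce : c * e = 0 by apply/he; exists 1; rewrite mulr1.
  have rr : (1 - e) * (1 - e) = 1 - e.
    by rewrite mulrBl mul1r mulrBr mulr1 ee subrr subr0.
  exists (1 - e); split => //.
  - by rewrite sB s1 se.
  - by apply: ab.
  - by rewrite mulrBr mulr1 ce subr0.
  - move=> y /he [z ->]; by rewrite mulrBl mul1r mulrA ee subrr.
have lemA : forall c r p, s r = r -> (forall y, c * y = 0 -> r * y = 0) ->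
    c * s p = c -> r = p * r.
  move=> c r p sr hr csp.
  have : r * (1 - s p) = 0 by apply: hr; rewrite mulrBr mulr1 csp subrr.
  rewrite mulrBr mulr1 => /eqP; rewrite subr_eq0 => /eqP h.
  by rewrite -[LHS]sr [in LHS]h sM sK sr.
have lemB : forall c r y, (forall z, c * z = 0 -> r * z = 0) -> s r = r ->
    c * s y = 0 -> y * r = 0.
  move=> c r y hr sr h; have := hr _ h => /(congr1 s).
  by rewrite sM sK sr s0.
split.
  split; first by exists 0; rewrite s0 ?mulr0 ?mul0r.
    by exists 0; rewrite s0 ?mulr0 ?mul0r.
  move=> c [y [yc ya csy asy]] [z [zc zb csz bsz]].
  have c0 : c = 0.
    have h1 : x * c = c by rewrite -asy mulrA xa.
    by rewrite -h1 -bsz mulrA xb mul0r.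
  by rewrite c0; exists 0; rewrite s0 ?mulr0 ?mul0r.
split.
- by exists x; rewrite mulrDr mulrDl xa xb asx bsx !addr0.
- exists (1 - x); rewrite sB s1 ?mulrBl ?mul1r ?mulrBr ?mulr1 ?mulrDl ?mulrBr ?mulr1.
  by split; rewrite ?mulrDr ?xa ?xb ?asx ?bsx ?addr0 ?subr0 // addrAC subrr add0r.
move=> c [p [pa pc asp csp]] [q [qb qc bsq csq]].
have [ra [rara sra cra ara hra]] := RP a.
have [rb [rbrb srb crb brb hrb]] := RP b.
have eA : forall c1 d1 p1 r1, s r1 = r1 -> (forall y, c1 * y = 0 -> r1 * y = 0) ->
    (forall y, r1 * y = y * r1) -> c1 * r1 = c1 ->
    p1 * c1 = c1 -> p1 * d1 = c1 -> c1 * s p1 = c1 -> r1 * d1 = c1.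
  move=> c1 d1 p1 r1 sr1 hr1 crr cr pc1 pd1 csp0.
  have h1 := lemA _ _ _ sr1 hr1 csp0.
  have : r1 * (d1 - c1) = 0.
    by rewrite h1 -crr -mulrA mulrBr pd1 pc1 subrr mulr0.
  by rewrite mulrBr => /eqP; rewrite subr_eq0 (crr c1) cr => /eqP.
have rac := eA _ _ _ _ sra hra cra ara pa pc asp.
have rbc := eA _ _ _ _ srb hrb crb brb qb qc bsq.
have xra : ra = x * ra := lemA _ _ _ sra hra asx.
have xrb : x * rb = 0 := lemB _ _ _ hrb srb bsx.
have rab : ra * rb = 0 by rewrite xra -mulrA cra mulrA xrb mul0r.
have rba : rb * ra = 0 by rewrite crb.
have wc : (ra + rb) * c = a + b by rewrite mulrDl rac rbc.
have wab : (ra + rb) * (a + b) = a + b.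
  rewrite -[in LHS]rac -[in LHS]rbc !mulrDl !mulrDr !mulrA rara rbrb rab rba !mul0r addr0 add0r.
  by rewrite rac rbc.
exists (ra + rb); rewrite sD sra srb; split => //.
  by rewrite mulrDr -(cra (a + b)) -(crb (a + b)) -mulrDl.
  by rewrite mulrDr -(cra c) -(crb c) -mulrDl.
Qed.
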